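(* Let $F$ be a field of characteristic $2$, let $\mathfrak b$ be an anisotropic symmetric bilinear form over $F$, and let $\phi$ be a subform of the quasilinear quadratic form $\phi_{\mathfrak b}$. Then there exists a subform $\mathfrak c$ of $\mathfrak b$ with $\phi_{\mathfrak c}\simeq\phi$, and such a $\mathfrak c$ is unique up to isometry.
   Context: Symmetric bilinear forms are non-degenerate and finite-dimensional; $\phi_{\mathfrak b}(v)=\mathfrak b(v,v)$ is the quadratic form associated to $\mathfrak b$, which is quasilinear ($\phi(v+w)=\phi(v)+\phi(w)$). A subform of a symmetric bilinear form $\mathfrak b$ is a form isometric to an orthogonal summand of $\mathfrak b$. A subform of a quasilinear quadratic form $\phi$ is a quasilinear form $\psi$ with $\phi\simeq\psi\perp\sigma$ for some quasilinear quadratic form $\sigma$. *)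

(* Defs.v *)
From HB Require Import structures.
From mathcomp Require Import all_boot all_order all_algebra.
Set Implicit Arguments. Unset Strict Implicit. Unset Printing Implicit Defensive.
Import Order.TTheory GRing.Theory Num.Theory.
Local Open Scope ring_scope.

Section Forms.
Variable F : fieldType.

(* A (non-degenerate) symmetric bilinear form on F^n, given by its Gram
   matrix B : (x, y) |-> x B y^T. *)
Definition sym_bilin_form n (B : 'M[F]_n) : Prop :=
  B^T = B /\ \det B != 0.

Definition bform n (B : 'M[F]_n) (x y : 'rV[F]_n) : F := (x *m B *m y^T) 0 0.

Definition phi_b n (B : 'M[F]_n) : 'rV[F]_n -> F := fun x => bform B x x.

Definition anisotropic_bilin n (B : 'M[F]_n) : Prop :=
  forall x : 'rV[F]_n, bform B x x = 0 -> x = 0.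

(* isometry of bilinear forms (possibly given on spaces of a priori
   different dimensions): an invertible linear map P with B(x,y) = C(xP,yP) *)
Definition bilin_iso m n (B : 'M[F]_m) (C : 'M[F]_n) : Prop :=
  m = n /\ exists P : 'M[F]_(m, n), row_free P /\ P *m C *m P^T = B.

Definition bilin_osum m k (B : 'M[F]_m) (D : 'M[F]_k) : 'M[F]_(m + k) :=
  block_mx B 0 0 D.

Definition bilin_subform m n (C : 'M[F]_m) (B : 'M[F]_n) : Prop :=
  sym_bilin_form C /\
  exists k (D : 'M[F]_k), sym_bilin_form D /\ bilin_iso (bilin_osum C D) B.

Definition quasilinear n (q : 'rV[F]_n -> F) : Prop :=
  (forall a x, q (a *: x) = a ^+ 2 * q x) /\
  (forall x y, q (x + y) = q x + q y).

Definition quad_iso m n (q1 : 'rV[F]_m -> F) (q2 : 'rV[F]_n -> F) : Prop :=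
  m = n /\ exists P : 'M[F]_(m, n), row_free P /\ forall x, q1 x = q2 (x *m P).

Definition quad_osum m k (q1 : 'rV[F]_m -> F) (q2 : 'rV[F]_k -> F)
  : 'rV[F]_(m + k) -> F := fun x => q1 (lsubmx x) + q2 (rsubmx x).

Definition ql_subform m n (psi : 'rV[F]_m -> F) (phi : 'rV[F]_n -> F) : Prop :=
  quasilinear psi /\
  exists k (s : 'rV[F]_k -> F), quasilinear s /\ quad_iso phi (quad_osum psi s).

End Forms.

(* Main.v *)
Require Import Defs.
From mathcomp Require Import all_boot all_order all_algebra ring.
Import GRing.Theory.
Local Open Scope ring_scope.

Section H.
Variable F : fieldType.

Lemma bform_sym n (b : 'M[F]_n) u v : b^T = b -> bform b u v = bform b v u.
Proof.
move=> hb; rewrite /bform.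
have -> : v *m b *m u^T = (u *m b *m v^T)^T by rewrite !trmx_mul !trmxK hb mulmxA.
by rewrite [RHS]mxE.
Qed.

Lemma phi_bB n (b : 'M[F]_n) u v : 2%N \in [pchar F] -> b^T = b ->
  phi_b b (u - v) = phi_b b u + phi_b b v.
Proof.
move=> c2 hb; rewrite /phi_b /bform linearB /= !mulmxBl !mulmxBr.
have e : v *m b *m u^T = (u *m b *m v^T)^T by rewrite !trmx_mul !trmxK hb mulmxA.
rewrite e.
set a := u *m b *m u^T; set y := u *m b *m v^T; set d := v *m b *m v^T.
clearbody a y d; rewrite !mxE.
have h2 : y 0 0 + y 0 0 = 0 by rewrite -mulr2n -mulr_natr pcharf0 // mulr0.
have -> : a 0 0 - y 0 0 - (y 0 0 - d 0 0) = a 0 0 + d 0 0 - (y 0 0 + y 0 0) by ring.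
by rewrite h2 subr0.
Qed.


Lemma phi_b_inj n (b : 'M[F]_n) u v : 2%N \in [pchar F] -> b^T = b ->
  anisotropic_bilin b -> phi_b b u = phi_b b v -> u = v.
Proof.
move=> c2 hb an e; apply/eqP; rewrite -subr_eq0; apply/eqP; apply: an.
rewrite -/(phi_b b (u - v)) phi_bB // e -mulr2n -mulr_natr pcharf0 // mulr0.
by []. Qed.

Lemma phi_b_sub n k (b : 'M[F]_n) (Q : 'M[F]_(k, n)) y :
  phi_b (Q *m b *m Q^T) y = phi_b b (y *m Q).
Proof. by rewrite /phi_b /bform trmx_mul !mulmxA. Qed.

End H.

Theorem lemma3p2 (F : fieldType) (charF : 2%N \in [pchar F])
  (n : nat) (b : 'M[F]_n) (hb : sym_bilin_form b) (anis : anisotropic_bilin b)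
  (m : nat) (phi : 'rV[F]_m -> F) (hphi : ql_subform phi (phi_b b)) :
  (exists (k : nat) (c : 'M[F]_k), bilin_subform c b /\ quad_iso (phi_b c) phi) /\
  (forall (k1 k2 : nat) (c1 : 'M[F]_k1) (c2 : 'M[F]_k2),
      bilin_subform c1 b -> bilin_subform c2 b ->
      quad_iso (phi_b c1) phi -> quad_iso (phi_b c2) phi ->
      bilin_iso c1 c2).
Proof.
case: hb => bT bdet.
case: hphi => qphi [k [s [qs [enk [P [Pfree Pe]]]]]].
subst n.
split; last first.
  move=> k1 k2 c1 c2 [_ [k1' [D1 [_ [e1 [P1 [_ P1e]]]]]]]
    [_ [k2' [D2 [_ [e2 [P2 [_ P2e]]]]]]] [ek1 [M1 [M1f M1e]]] [ek2 [M2 [M2f M2e]]].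
  subst k1 k2.
  move: P1e; rewrite -[P1]vsubmxK tr_col_mx mul_col_mx mul_col_row /bilin_osum.
  move=> /eq_block_mx [h1 _ _ _].
  move: P2e; rewrite -[P2]vsubmxK tr_col_mx mul_col_mx mul_col_row /bilin_osum.
  move=> /eq_block_mx [h2 _ _ _].
  set Q1 := usubmx P1 in h1; set Q2 := usubmx P2 in h2.
  have M1u : M1 \in unitmx by rewrite -row_free_unit.
  have M2u : M2 \in unitmx by rewrite -row_free_unit.
  set T := M1 *m invmx M2.
  have hT : forall y, phi_b b (y *m T *m Q2) = phi_b b (y *m Q1).
    move=> y; rewrite -(phi_b_sub _ _ _ _ Q2 (y *m T)) -(phi_b_sub _ _ _ _ Q1 y) h1 h2 M1e M2e /T mulmxA mulmxKV //.
  have TQ : T *m Q2 = Q1.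
    apply/row_matrixP => i; rewrite !rowE.
    apply: (phi_b_inj _ _ _ _ _ charF bT anis); rewrite mulmxA; exact: hT.
  split; first by [].
  exists T; split.
    by rewrite row_free_unit /T unitmx_mul M1u unitmx_inv M2u.
  by rewrite -h1 -h2 -TQ [(T *m Q2)^T]trmx_mul !mulmxA.
have s0 : s 0 = 0.
  by have := qs.1 0 0; rewrite scale0r expr2 !mul0r.
have Pu : P \in unitmx by rewrite -row_free_unit.
set Pi := invmx P.
have key : forall y : 'rV[F]_m, phi_b b (row_mx y 0 *m Pi) = phi y.
  move=> y; rewrite Pe /quad_osum /Pi mulmxKV // row_mxKl row_mxKr s0 addr0 //.
set Q := usubmx Pi; set R0 := dsubmx Pi.
have yQ : forall y : 'rV[F]_m, y *m Q = row_mx y 0 *m Pi.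
  by move=> y; rewrite -[in RHS](vsubmxK Pi) mul_row_col mul0mx addr0.
set c := Q *m b *m Q^T.
have phic : forall y, phi_b c y = phi y by move=> y; rewrite phi_b_sub yQ key.
have cT : c^T = c by rewrite /c !trmx_mul trmxK bT mulmxA.
have cdet : \det c != 0.
  apply/negP => /det0P [y yn0 yc].
  have : phi_b c y = 0 by rewrite /phi_b /bform yc mul0mx mxE.
  rewrite phi_b_sub => /anis; rewrite yQ => h.
  have : row_mx y 0 = 0 :> 'rV[F]_(m + k).
    by rewrite -(mulmxKV Pu (row_mx y 0)) -/Pi h mul0mx.
  rewrite -row_mx0 => /eq_row_mx [hy _].
  by move: yn0; rewrite hy eqxx.
have cu : c \in unitmx by rewrite unitmxE unitfE.
set X := R0 *m b *m Q^T *m invmx c.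
set R := R0 - X *m Q.
have RbQ : R *m b *m Q^T = 0.
  rewrite /R !mulmxBl.
  have -> : X *m Q *m b *m Q^T = X *m c by rewrite /c !mulmxA.
  by rewrite /X mulmxKV // subrr.
have QbR : Q *m b *m R^T = 0.
  have <- : (R *m b *m Q^T)^T = Q *m b *m R^T by rewrite !trmx_mul trmxK bT mulmxA.
  by rewrite RbQ trmx0.
set P' := col_mx Q R.
set D := R *m b *m R^T.
have P'e : P' *m b *m P'^T = block_mx c 0 0 D.
  by rewrite /P' tr_col_mx mul_col_mx mul_col_row QbR RbQ.
have P'u : P' \in unitmx.
  have -> : P' = block_mx 1%:M 0 (- X) 1%:M *m Pi.
    rewrite -[in RHS](vsubmxK Pi) mul_block_col !mul1mx mul0mx addr0 mulNmx.
    by rewrite /P' /R addrC.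
  by rewrite unitmx_mul unitmxE det_lblock !det1 mulr1 unitr1 /Pi unitmx_inv.
have DT : D^T = D by rewrite /D !trmx_mul trmxK bT mulmxA.
have Ddet : \det D != 0.
  have : \det (block_mx c 0 0 D) != 0.
    rewrite -P'e !det_mulmx det_tr !mulf_neq0 //; by rewrite -unitfE -unitmxE.
  by rewrite det_lblock mulf_eq0 negb_or => /andP[_ ->].
exists m, c; split.
  split; first by split.
  exists k, D; split; first by split.
  split; first by [].
  exists P'; split; first by rewrite row_free_unit.
  by rewrite P'e.
split; first by [].
exists 1%:M; split; first by rewrite row_free_unit unitmx1.
by move=> y; rewrite mulmx1 phic.
Qed.
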